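(* Let $N$ be a nonnegative integer, let $\eta_1,\eta_2$ be real numbers with $0<\eta_1,\eta_2<1$ and $\eta_1+\eta_2<1$, and let $u_1,v_1,u_2,v_2$ be arbitrary complex numbers. Then for all nonnegative integers $n_1,n_2$ with $n_1+n_2\le N$, \[ \sum_{\substack{x_1,x_2\ge 0\\ x_1+x_2\le N}} b_2(x_1,x_2;N;\eta_1,\eta_2)\,P_{n_1,n_2}(x_1,x_2)=(1-\eta_1u_1-\eta_2v_1)^{n_1}(1-\eta_1u_2-\eta_2v_2)^{n_2}. \]
   Context: Notation: $(a)_k=a(a+1)\cdots(a+k-1)$, $(a)_0=1$, is the Pochhammer symbol. For a nonnegative integer $N$ and nonnegative integers $m_1,m_2,x_1,x_2$ with $m_1+m_2\le N$, $x_1+x_2\le N$, and parameters $u_1,v_1,u_2,v_2$, define the 2-variable Krawtchouk polynomial \[ P_{m_1,m_2}(x_1,x_2)=\sum_{\substack{i,j,k,l\ge 0\\ i+j+k+l\le N}}\frac{(-m_1)_{i+j}(-m_2)_{k+l}(-x_1)_{i+k}(-x_2)_{j+l}}{i!\,j!\,k!\,l!\,(-N)_{i+j+k+l}}\,u_1^i v_1^j u_2^k v_2^l . \] The trinomial distribution is $b_2(x_1,x_2;N;\eta_1,\eta_2)=\frac{N!}{x_1!\,x_2!\,(N-x_1-x_2)!}\eta_1^{x_1}\eta_2^{x_2}(1-\eta_1-\eta_2)^{N-x_1-x_2}$. *)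

(* Defs.v *)
(* Complex numbers: an arbitrary numClosedFieldType C
   (e.g. the complex numbers); the eta's are elements of C with 0 < eta < 1,
   which forces them to be real. *)
From HB Require Import structures.
From mathcomp Require Import all_boot all_order all_algebra.
Set Implicit Arguments. Unset Strict Implicit. Unset Printing Implicit Defensive.
Import Order.TTheory GRing.Theory Num.Theory.
Local Open Scope ring_scope.

Definition poch {R : ringType} (a : R) (k : nat) : R :=
  \prod_(i < k) (a + i%:R).

Definition krawtchouk2 {C : fieldType} (N : nat) (u1 v1 u2 v2 : C)
  (m1 m2 x1 x2 : nat) : C :=
  \sum_(i < N.+1) \sum_(j < N.+1) \sum_(k < N.+1)
   \sum_(l < N.+1 | (i + j + k + l <= N)%N)
    (poch (- m1%:R) (i + j) * poch (- m2%:R) (k + l)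
     * poch (- x1%:R) (i + k) * poch (- x2%:R) (j + l))
    / ((i`! * j`! * k`! * l`!)%:R * poch (- N%:R) (i + j + k + l))
    * u1 ^+ i * v1 ^+ j * u2 ^+ k * v2 ^+ l.

Definition trinomial {C : fieldType} (N x1 x2 : nat) (eta1 eta2 : C) : C :=
  (N`!)%:R / ((x1`! * x2`! * (N - x1 - x2)`!)%:R)
  * eta1 ^+ x1 * eta2 ^+ x2 * (1 - eta1 - eta2) ^+ (N - x1 - x2).

(* Main.v *)
Require Import Defs.
From HB Require Import structures.
From mathcomp Require Import all_boot all_order all_algebra.
From mathcomp Require Import ssrAC.
Import Order.TTheory GRing.Theory Num.Theory.
Local Open Scope ring_scope.

Lemma ffactD (m i j : nat) : (m ^_ (i + j) = m ^_ i * (m - i) ^_ j)%N.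
Proof.
elim: j => [|j IH]; first by rewrite addn0 ffactn0 muln1.
by rewrite addnS !ffactnSr IH subnDA mulnA.
Qed.

Lemma bin_ffact_shift (M x b : nat) : (b <= x)%N ->
  ('C(M, x) * x ^_ b = M ^_ b * 'C(M - b, x - b))%N.
Proof.
move=> bx; case: (leqP x M) => xM.
  have bM : (b <= M)%N by apply: leq_trans xM.
  have pos : (0 < (x - b)`! * (M - x)`!)%N by rewrite muln_gt0 !fact_gt0.
  apply/eqP; rewrite -(eqn_pmul2r pos); apply/eqP.
  have e1 : (M - b - (x - b) = M - x)%N by rewrite subnBA // subnK.
  transitivity (M`!).
    rewrite -mulnA (mulnA (x ^_ b)) ffact_fact //.
    by rewrite bin_fact.
  by rewrite -e1 -mulnA bin_fact ?leq_sub2r // ffact_fact.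
rewrite bin_small // mul0n.
case: (leqP b M) => bM; last by rewrite ffact_small.
by rewrite bin_small ?muln0 // ltn_sub2rE.
Qed.

Lemma poch_neg {R : comRingType} (m k : nat) :
  poch (- (m%:R : R)) k = (-1) ^+ k * (m ^_ k)%:R.
Proof.
rewrite /poch; elim: k => [|k IH]; first by rewrite big_ord0 expr0 mul1r.
rewrite big_ord_recr /= IH ffactnSr natrM exprS.
case: (leqP k m) => km.
  by rewrite natrB // -opprB !mulrN mulN1r -!mulrA mulNr opprK [- _ + _]addrC.
rewrite ffact_small // mul0r !mulr0 mul0r; done.
Qed.

Lemma binmom {R : comRingType} (M K b : nat) (p q : R) : (M <= K)%N ->
  \sum_(x < K.+1) ('C(M, x) * x ^_ b)%:R * p ^+ x * q ^+ (M - x)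
  = (M ^_ b)%:R * p ^+ b * (p + q) ^+ (M - b).
Proof.
move=> MK.
pose F := fun x : nat => ('C(M, x) * x ^_ b)%:R * p ^+ x * q ^+ (M - x).
transitivity (\sum_(x < M.+1) F x).
  rewrite [RHS](big_ord_widen K.+1 F) // [RHS]big_mkcond; apply: eq_bigr => i _.
  case: ifP => // /negbT; rewrite -leqNgt => h.
  symmetry.
  by rewrite /F bin_small // mul0n mul0r mul0r.
case: (leqP b M) => bM; last first.
  rewrite ffact_small // mul0r mul0r big1 // => i _.
  rewrite /F ffact_small ?muln0 ?mul0r //.
  by apply: leq_ltn_trans bM; rewrite -ltnS.
rewrite -(big_mkord xpredT) (big_cat_nat _ (n:=b)) //=; last by rewrite ltnW.
rewrite big_nat_cond big1 ?add0r; last first.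
  by move=> x /andP[/andP[_ xb] _]; rewrite /F ffact_small // muln0 !mul0r.
rewrite -{1}(add0n b) big_addn subSn // big_mkord.
rewrite addrC exprDn big_distrr /=; apply: eq_bigr => y _.
rewrite /F bin_ffact_shift ?leq_addl // addnK natrM exprD.
rewrite -subnDA addnC subnDA.
by rewrite -[X in _ = _ * X]mulr_natr !mulrA [LHS](ACl (1*4*5*3*2)).
Qed.

Lemma tri_bin (C : numFieldType) (N x1 x2 : nat) (e1 e2 : C) : (x1 + x2 <= N)%N ->
  trinomial N x1 x2 e1 e2 =
  ('C(N, x1) * 'C(N - x1, x2))%:R * e1 ^+ x1 * e2 ^+ x2 * (1 - e1 - e2) ^+ (N - x1 - x2).
Proof.
move=> h.
have h1 : (x1 <= N)%N by apply: leq_trans h; rewrite leq_addr.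
have h2 : (x2 <= N - x1)%N by rewrite leq_subRL // addnC.
have E : ('C(N, x1) * 'C(N - x1, x2) * (x1`! * x2`! * (N - x1 - x2)`!))%N = N`!.
  rewrite -(bin_fact h1) -(bin_fact h2).
  by rewrite !mulnA [LHS](ACl (1*3*2*4*5)).
rewrite /trinomial -E natrM mulfK //.
by rewrite pnatr_eq0 -lt0n !muln_gt0 !fact_gt0.
Qed.

Lemma binsym (N x b : nat) : (x <= N)%N ->
  ('C(N, x) * (N - x) ^_ b = N ^_ b * 'C(N - b, x))%N.
Proof.
move=> xN; case: (leqP b (N - x)) => h.
  have xNb : (x <= N - b)%N by rewrite leq_subRL ?(leq_trans h) ?leq_subr // addnC -leq_subRL.
  rewrite -{1}(bin_sub xN) bin_ffact_shift // subnAC bin_sub //.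
rewrite ffact_small // muln0.
case: (leqP b N) => bN; last by rewrite ffact_small.
by rewrite bin_small ?muln0 // ltn_subLR // addnC -ltn_subLR.
Qed.

Lemma mom2 (C : numFieldType) (N a b : nat) (e1 e2 : C) :
  \sum_(x1 < N.+1) \sum_(x2 < N.+1 | (x1 + x2 <= N)%N)
     trinomial N x1 x2 e1 e2 * ((x1 ^_ a)%:R * (x2 ^_ b)%:R)
  = (N ^_ (a + b))%:R * e1 ^+ a * e2 ^+ b.
Proof.
set c := 1 - e1 - e2.
transitivity (\sum_(x1 < N.+1) (('C(N, x1) * x1 ^_ a)%:R * e1 ^+ x1) *
   \sum_(x2 < N.+1) ('C(N - x1, x2) * x2 ^_ b)%:R * e2 ^+ x2 * c ^+ (N - x1 - x2)).
  apply: eq_bigr => x1 _; rewrite big_mkcond big_distrr; apply: eq_bigr => x2 _ /=.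
  case: ifP => h.
    rewrite tri_bin // !natrM !mulrA.
    by rewrite [LHS](ACl (1*6*3*2*7*4*5)).
  rewrite (@bin_small (N - x1)) ?mul0n ?mul0r ?mulr0 //.
  by rewrite ltn_subLR ?ltnNge ?h // -ltnS.
have ec : e2 + c = 1 - e1 by rewrite /c addrC subrK.
transitivity (\sum_(x1 < N.+1) (N ^_ b)%:R * e2 ^+ b *
   (('C(N - b, x1) * x1 ^_ a)%:R * e1 ^+ x1 * (1 - e1) ^+ (N - b - x1))).
  apply: eq_bigr => x1 _.
  rewrite binmom ?leq_subr // ec subnAC.
  have key : ('C(N, x1))%:R * ((N - x1) ^_ b)%:R = (N ^_ b)%:R * ('C(N - b, x1))%:R :> C.
    by rewrite -!natrM binsym // -ltnS.
  rewrite !natrM !mulrA [LHS](ACl (1*4*2*3*5*6)) /= key.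
  by rewrite [LHS](ACl (1*5*2*3*4*6)).
rewrite -big_distrr /= binmom ?leq_subr // addrC subrK expr1n mulr1.
by rewrite addnC ffactD natrM !mulrA [LHS](ACl (1*3*4*2)).
Qed.

Lemma binom2 (C : numFieldType) (m N : nat) (a b : C) : (m <= N)%N ->
  \sum_(i < N.+1) \sum_(j < N.+1)
    poch (- (m%:R : C)) (i + j) / ((i`! * j`!)%:R) * a ^+ i * b ^+ j
  = (1 - a - b) ^+ m.
Proof.
move=> mN.
transitivity (\sum_(i < N.+1) ('C(m, i) * i ^_ 0)%:R * (- a) ^+ i *
   \sum_(j < N.+1) ('C(m - i, j) * j ^_ 0)%:R * (- b) ^+ j * 1 ^+ (m - i - j)).
  apply: eq_bigr => i _; rewrite big_distrr; apply: eq_bigr => j _ /=.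
  have E : (m ^_ (i + j) = 'C(m, i) * 'C(m - i, j) * (i`! * j`!))%N.
    by rewrite ffactD -!bin_ffact !mulnA [RHS](ACl (1*3*2*4)).
  rewrite poch_neg E (natrM _ (_ * _)) mulrA mulfK; last first.
    by rewrite pnatr_eq0 muln_eq0 negb_or -!lt0n !fact_gt0.
  rewrite !ffactn0 !muln1 expr1n mulr1 (natrM _ (binomial m i)) (exprNn a) (exprNn b) exprD !mulrA.
  by rewrite [LHS](ACl (3*1*5*4*2*6)).

under eq_bigr => i _ do rewrite (binmom _ _ _ _ _ (leq_trans (leq_subr i m) mN)).
under eq_bigr => i _ do rewrite [(_ - _) ^_ 0]ffactn0 mulr1n mul1r expr0 mul1r subn0.
rewrite binmom // ffactn0 mulr1n mul1r expr0 mul1r subn0.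
by rewrite [- b + 1]addrC addrCA addrA.
Qed.

Lemma Eswap (C : numFieldType) (N : nat) (t : nat -> nat -> C) (I : finType)
  (P : pred I) (g : I -> nat -> nat -> C) :
  \sum_(x1 < N.+1) \sum_(x2 < N.+1 | (x1 + x2 <= N)%N) t x1 x2 * (\sum_(i | P i) g i x1 x2)
  = \sum_(i | P i) \sum_(x1 < N.+1) \sum_(x2 < N.+1 | (x1 + x2 <= N)%N) t x1 x2 * g i x1 x2.
Proof.
rewrite exchange_big /=; apply: eq_bigr => x1 _.
under eq_bigr => x2 _ do rewrite big_distrr.
by rewrite exchange_big.
Qed.

Lemma Escal (C : numFieldType) (N : nat) (t f : nat -> nat -> C) (c : C) :
  \sum_(x1 < N.+1) \sum_(x2 < N.+1 | (x1 + x2 <= N)%N) t x1 x2 * (c * f x1 x2)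
  = c * \sum_(x1 < N.+1) \sum_(x2 < N.+1 | (x1 + x2 <= N)%N) t x1 x2 * f x1 x2.
Proof.
rewrite big_distrr; apply: eq_bigr => x1 _; rewrite big_distrr; apply: eq_bigr => x2 _.
by rewrite mulrCA.
Qed.

Lemma mom2p (C : numFieldType) (N a b : nat) (e1 e2 : C) :
  \sum_(x1 < N.+1) \sum_(x2 < N.+1 | (x1 + x2 <= N)%N)
     trinomial N x1 x2 e1 e2 * (poch (- (x1%:R : C)) a * poch (- (x2%:R : C)) b)
  = poch (- (N%:R : C)) (a + b) * e1 ^+ a * e2 ^+ b.
Proof.
transitivity (\sum_(x1 < N.+1) \sum_(x2 < N.+1 | (x1 + x2 <= N)%N)
     trinomial N x1 x2 e1 e2 * ((-1) ^+ (a + b) * ((x1 ^_ a)%:R * (x2 ^_ b)%:R))).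
  apply: eq_bigr => x1 _; apply: eq_bigr => x2 _.
  by rewrite !poch_neg exprD !mulrA [LHS](ACl (1*2*4*3*5)).
by rewrite (@Escal _ N (fun x1 x2 => trinomial N x1 x2 e1 e2) (fun x1 x2 => (x1 ^_ a)%:R * (x2 ^_ b)%:R)) mom2 poch_neg !mulrA.
Qed.

Lemma EswapO (C : numFieldType) (N : nat) (t : 'I_N.+1 -> 'I_N.+1 -> C) (I : finType)
  (P : pred I) (g : I -> 'I_N.+1 -> 'I_N.+1 -> C) :
  \sum_(x1 < N.+1) \sum_(x2 < N.+1 | (x1 + x2 <= N)%N) t x1 x2 * (\sum_(i | P i) g i x1 x2)
  = \sum_(i | P i) \sum_(x1 < N.+1) \sum_(x2 < N.+1 | (x1 + x2 <= N)%N) t x1 x2 * g i x1 x2.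
Proof.
rewrite exchange_big /=; apply: eq_bigr => x1 _.
under eq_bigr => x2 _ do rewrite big_distrr.
by rewrite exchange_big.
Qed.

Lemma EscalO (C : numFieldType) (N : nat) (t f : 'I_N.+1 -> 'I_N.+1 -> C) (c : C) :
  \sum_(x1 < N.+1) \sum_(x2 < N.+1 | (x1 + x2 <= N)%N) t x1 x2 * (c * f x1 x2)
  = c * \sum_(x1 < N.+1) \sum_(x2 < N.+1 | (x1 + x2 <= N)%N) t x1 x2 * f x1 x2.
Proof.
rewrite big_distrr; apply: eq_bigr => x1 _; rewrite big_distrr; apply: eq_bigr => x2 _.
by rewrite mulrCA.
Qed.

Theorem mainTheorem1 (C : numClosedFieldType) (N : nat) (eta1 eta2 : C)
  (h1 : 0 < eta1) (h1' : eta1 < 1) (h2 : 0 < eta2) (h2' : eta2 < 1)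
  (h12 : eta1 + eta2 < 1) (u1 v1 u2 v2 : C) (n1 n2 : nat)
  (hn : (n1 + n2 <= N)%N) :
  \sum_(x1 < N.+1) \sum_(x2 < N.+1 | (x1 + x2 <= N)%N)
     trinomial N x1 x2 eta1 eta2 * krawtchouk2 N u1 v1 u2 v2 n1 n2 x1 x2
  = (1 - eta1 * u1 - eta2 * v1) ^+ n1 * (1 - eta1 * u2 - eta2 * v2) ^+ n2.
Proof.
pose W := fun i j k l : nat =>
  poch (- (n1%:R : C)) (i + j) * poch (- (n2%:R : C)) (k + l)
  / ((i`! * j`! * k`! * l`!)%:R * poch (- (N%:R : C)) (i + j + k + l))
  * u1 ^+ i * v1 ^+ j * u2 ^+ k * v2 ^+ l.
pose F1 := fun i j : nat => poch (- (n1%:R : C)) (i + j) / ((i`! * j`!)%:R)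
  * (eta1 * u1) ^+ i * (eta2 * v1) ^+ j.
pose F2 := fun k l : nat => poch (- (n2%:R : C)) (k + l) / ((k`! * l`!)%:R)
  * (eta1 * u2) ^+ k * (eta2 * v2) ^+ l.
have Kdef : forall x1 x2 : nat, krawtchouk2 N u1 v1 u2 v2 n1 n2 x1 x2 =
  \sum_(i < N.+1) \sum_(j < N.+1) \sum_(k < N.+1) \sum_(l < N.+1 | (i + j + k + l <= N)%N)
    W i j k l * (poch (- (x1%:R : C)) (i + k) * poch (- (x2%:R : C)) (j + l)).
  move=> x1 x2; rewrite /krawtchouk2; apply: eq_bigr => i _; apply: eq_bigr => j _.
  apply: eq_bigr => k _; apply: eq_bigr => l _; rewrite /W !mulrA.
  by rewrite [LHS](ACl (1*2*5*6*7*8*9*3*4)).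
transitivity (\sum_(i < N.+1) \sum_(j < N.+1) \sum_(k < N.+1)
   \sum_(l < N.+1 | (i + j + k + l <= N)%N) F1 i j * F2 k l).
  under eq_bigr => x1 _ do under eq_bigr => x2 _ do rewrite Kdef.
  rewrite EswapO; apply: eq_bigr => i _; rewrite EswapO; apply: eq_bigr => j _.
  rewrite EswapO; apply: eq_bigr => k _; rewrite EswapO; apply: eq_bigr => l hl.
  rewrite EscalO mom2p /W /F1 /F2.
  have e : (i + k + (j + l) = i + j + k + l)%N by rewrite addnACA addnA.
  have eD : (i`! * j`! * k`! * l`! = (i`! * j`!) * (k`! * l`!))%N by rewrite !mulnA.
  have PN0 : poch (- (N%:R : C)) (i + j + k + l) != 0.
    rewrite poch_neg mulf_eq0 negb_or expf_eq0 oppr_eq0 oner_eq0 andbF /=.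
    by rewrite pnatr_eq0 -lt0n ffact_gt0.
  rewrite e eD natrM !exprD !exprMn !invfM !mulrA.
  by rewrite [LHS](ACl (5*10*1*3*11*6*13*7*2*4*12*8*14*9)) /= mulVf // mul1r.
have F1z : forall i j : nat, (n1 < i + j)%N -> F1 i j = 0.
  by move=> i j h; rewrite /F1 poch_neg ffact_small // mulr0 !mul0r.
have F2z : forall k l : nat, (n2 < k + l)%N -> F2 k l = 0.
  by move=> k l h; rewrite /F2 poch_neg ffact_small // mulr0 !mul0r.
transitivity (\sum_(i < N.+1) \sum_(j < N.+1) \sum_(k < N.+1)
   \sum_(l < N.+1) F1 i j * F2 k l).
  apply: eq_bigr => i _; apply: eq_bigr => j _; apply: eq_bigr => k _.
  rewrite big_mkcond; apply: eq_bigr => l _.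
  case: ifP => // /negbT; rewrite -ltnNge => hl.
  case: (leqP (i + j) n1) => ha; last by rewrite F1z // mul0r.
  case: (leqP (k + l) n2) => hb; last by rewrite F2z // mulr0.
  have := leq_add ha hb; rewrite addnA => h.
  by move: hl; rewrite ltnNge (leq_trans h hn).
have hN1 : (n1 <= N)%N by apply: leq_trans hn; rewrite leq_addr.
have hN2 : (n2 <= N)%N by apply: leq_trans hn; rewrite leq_addl.
rewrite -(@binom2 _ n1 N (eta1 * u1) (eta2 * v1) hN1) -(@binom2 _ n2 N (eta1 * u2) (eta2 * v2) hN2).
rewrite big_distrl; apply: eq_bigr => i _; rewrite big_distrl; apply: eq_bigr => j _.
rewrite big_distrr; apply: eq_bigr => k _; rewrite big_distrr; apply: eq_bigr => l _.
by [].
Qed.
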